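(* For all $x\ge 1$ and $n\ge x$, the $(x,x)$ edge-removal process on $n$ vertices always results in an $(x,x)$ task-dependency graph.
   Context: A task-dependency graph is a finite directed acyclic graph (no loops, no multiple edges). A vertex is initial if it has in-degree $0$ and terminal if it has out-degree $0$ (an isolated vertex is both). An $(x,y)$ task-dependency graph has exactly $x$ initial and exactly $y$ terminal vertices. The $(x,y)$ edge-removal process on $n$ vertices: start with the maximally connected task-dependency graph on vertex set $\{1,\dots,n\}$, having all edges $(a,b)$ with $a<b$. Edges are removed uniformly at random, one at a time; whenever a removal would cause the graph to have more than $x$ initial vertices or more than $y$ terminal vertices, the removal is cancelled. The process terminates when no further edge can be removed, and its result is the final graph. *)

(* Defs.v *)
From mathcomp Require Import all_boot.
Set Implicit Arguments. Unset Strict Implicit. Unset Printing Implicit Defensive.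

(* A graph on vertex set {1..n} (encoded as 'I_n, order preserved) is a set of
   directed edges (a,b). *)
Notation graph n := {set 'I_n * 'I_n}.

Definition complete_tdg (n : nat) : graph n := [set e : 'I_n * 'I_n | (e.1 < e.2)%N].

Definition initialb n (G : graph n) (v : 'I_n) : bool := [forall u, (u, v) \notin G].
Definition terminalb n (G : graph n) (v : 'I_n) : bool := [forall u, (v, u) \notin G].
Definition num_initial n (G : graph n) : nat := #|[set v | initialb G v]|.
Definition num_terminal n (G : graph n) : nat := #|[set v | terminalb G v]|.

(* A task-dependency graph on 'I_n: a DAG without loops/multi-edges.  Here we
   use the vertex order: every edge goes from a smaller to a larger vertex,
   which is exactly the class of subgraphs of the complete one (all graphs
   arising in the process are of this form). *)
Definition is_tdg n (G : graph n) : bool := G \subset complete_tdg n.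

Definition is_xy_tdg (x y : nat) n (G : graph n) : bool :=
  [&& is_tdg G, num_initial G == x & num_terminal G == y].

Definition removal_ok (x y : nat) n (G : graph n) (e : 'I_n * 'I_n) : bool :=
  [&& e \in G, (num_initial (G :\ e) <= x)%N & (num_terminal (G :\ e) <= y)%N].

Definition removal_step (x y : nat) n : rel (graph n) :=
  fun G H => [exists e, removal_ok x y G e && (H == G :\ e)].

Definition terminated (x y : nat) n (G : graph n) : bool :=
  [forall e, ~~ removal_ok x y G e].

Definition possible_result (x y : nat) n (G : graph n) : Prop :=
  connect (@removal_step x y n) (complete_tdg n) G /\ terminated x y G.

(* Main.v *)
Require Import Defs.
From mathcomp Require Import all_boot.
From mathcomp Require Import zify.
Set Implicit Arguments. Unset Strict Implicit. Unset Printing Implicit Defensive.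

Lemma termD1_sub n (G : graph n) e :
  [set v | terminalb (G :\ e) v] \subset e.1 |: [set v | terminalb G v].
Proof.
apply/subsetP => v; rewrite !inE => tv.
case: (eqVneq v e.1) => //= ne; apply/forallP => u; apply/negP => vu.
move/forallP: tv => /(_ u); rewrite !inE vu andbT negbK => /eqP ve.
by rewrite -ve eqxx in ne.
Qed.

Lemma initD1_sub n (G : graph n) e :
  [set v | initialb (G :\ e) v] \subset e.2 |: [set v | initialb G v].
Proof.
apply/subsetP => v; rewrite !inE => tv.
case: (eqVneq v e.2) => //= ne; apply/forallP => u; apply/negP => vu.
move/forallP: tv => /(_ u); rewrite !inE vu andbT negbK => /eqP ve.
by rewrite -ve eqxx in ne.
Qed.

Lemma termD1 n (G : graph n) e : num_terminal (G :\ e) <= (num_terminal G).+1.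
Proof.
have := subset_leq_card (termD1_sub G e); rewrite cardsU1 /num_terminal.
case: (_ \notin _) => /= h; lia.
Qed.

Lemma initD1 n (G : graph n) e : num_initial (G :\ e) <= (num_initial G).+1.
Proof.
have := subset_leq_card (initD1_sub G e); rewrite cardsU1 /num_initial.
case: (_ \notin _) => /= h; lia.
Qed.

Lemma init_ge x n (G : graph n) : x <= n -> terminated x x G ->
  num_terminal G <= x -> x <= num_initial G.
Proof.
move=> xn term hT.
case: (leqP x (num_initial G)) => // hI; exfalso.
have key: forall e, e \in G -> terminalb (G :\ e) e.1 /\ x <= num_terminal G.
  move=> e eG; have := forallP term e; rewrite /removal_ok eG /=.
  have hI' : num_initial (G :\ e) <= x := leq_trans (initD1 G e) hI.
  rewrite hI' /= -ltnNge => hT'; split; last first.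
    by have := termD1 G e => h; rewrite -ltnS (leq_trans hT' h).
  apply/negPn/negP => nt.
  have sub: [set v | terminalb (G :\ e) v] \subset [set v | terminalb G v].
    apply/subsetP => v; rewrite !inE => tv.
    case: (eqVneq v e.1) => [ve|ne]; first by move: nt; rewrite -ve tv.
    apply/forallP => u; apply/negP => vu.
    move/forallP: tv => /(_ u); rewrite !inE vu andbT negbK => /eqP ve.
    by rewrite -ve eqxx in ne.
  have := subset_leq_card sub; rewrite -/(num_terminal _) -/(num_terminal _).
  by move=> h; have := leq_trans hT' h; rewrite ltnNge hT.
have cardG : #|G| <= n - x.
  case: (set_0Vmem G) => [->|[e eG]]; first by rewrite cards0.
  have [_ hx] := key e eG.
  have inj : {in G &, injective (fun e : 'I_n * 'I_n => e.1)}.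
    move=> [a b] [a' b'] /key [t _] f'G /= eqa; subst a'.
    move: t => /forallP /(_ b'); rewrite !inE /= negb_and negbK f'G orbF.
    by move/eqP => ->.
  rewrite -(card_in_imset inj).
  have sub : (fun e : 'I_n * 'I_n => e.1) @: G \subset ~: [set v | terminalb G v].
    apply/subsetP => v /imsetP [[a b] abG ->]; rewrite !inE /=.
    by apply/negP => /forallP /(_ b); rewrite abG.
  have := subset_leq_card sub.
  have := cardsC [set v | terminalb G v]; rewrite card_ord -/(num_terminal _).
  by move=> hc hs; apply: leq_trans hs _; lia.
have sub : ~: [set v | initialb G v] \subset (fun e : 'I_n * 'I_n => e.2) @: G.
  apply/subsetP => v; rewrite !inE => /forallPn [u]; rewrite negbK => uv.
  by apply/imsetP; exists (u, v).
have h1 := leq_trans (subset_leq_card sub) (leq_trans (leq_imset_card _ G) cardG).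
move: h1; have := cardsC [set v | initialb G v]; rewrite card_ord -/(num_initial _).
lia.
Qed.

Lemma term_ge x n (G : graph n) : x <= n -> terminated x x G ->
  num_initial G <= x -> x <= num_terminal G.
Proof.
move=> xn term hI.
case: (leqP x (num_terminal G)) => // hT; exfalso.
have key: forall e, e \in G -> initialb (G :\ e) e.2 /\ x <= num_initial G.
  move=> e eG; have := forallP term e; rewrite /removal_ok eG /=.
  have hT' : num_terminal (G :\ e) <= x := leq_trans (termD1 G e) hT.
  rewrite hT' /= andbT -ltnNge => hI'; split; last first.
    by have := initD1 G e => h; rewrite -ltnS (leq_trans hI' h).
  apply/negPn/negP => nt.
  have sub: [set v | initialb (G :\ e) v] \subset [set v | initialb G v].
    apply/subsetP => v; rewrite !inE => tv.
    case: (eqVneq v e.2) => [ve|ne]; first by move: nt; rewrite -ve tv.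
    apply/forallP => u; apply/negP => vu.
    move/forallP: tv => /(_ u); rewrite !inE vu andbT negbK => /eqP ve.
    by rewrite -ve eqxx in ne.
  have := subset_leq_card sub; rewrite -/(num_initial _) -/(num_initial _).
  by move=> h; have := leq_trans hI' h; rewrite ltnNge hI.
have cardG : #|G| <= n - x.
  case: (set_0Vmem G) => [->|[e eG]]; first by rewrite cards0.
  have [_ hx] := key e eG.
  have inj : {in G &, injective (fun e : 'I_n * 'I_n => e.2)}.
    move=> [a b] [a' b'] /key [t _] f'G /= eqa; subst b'.
    move: t => /forallP /(_ a'); rewrite !inE /= negb_and negbK f'G orbF.
    by move/eqP => ->.
  rewrite -(card_in_imset inj).
  have sub : (fun e : 'I_n * 'I_n => e.2) @: G \subset ~: [set v | initialb G v].
    apply/subsetP => v /imsetP [[a b] abG ->]; rewrite !inE /=.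
    by apply/negP => /forallP /(_ a); rewrite abG.
  have := subset_leq_card sub.
  have := cardsC [set v | initialb G v]; rewrite card_ord -/(num_initial _).
  by move=> hc hs; apply: leq_trans hs _; lia.
have sub : ~: [set v | terminalb G v] \subset (fun e : 'I_n * 'I_n => e.1) @: G.
  apply/subsetP => v; rewrite !inE => /forallPn [u]; rewrite negbK => uv.
  by apply/imsetP; exists (v, u).
have h1 := leq_trans (subset_leq_card sub) (leq_trans (leq_imset_card _ G) cardG).
move: h1; have := cardsC [set v | terminalb G v]; rewrite card_ord -/(num_terminal _).
lia.
Qed.

Definition inv x n (G : graph n) :=
  [&& is_tdg G, num_initial G <= x & num_terminal G <= x].

Lemma inv_complete x n : 1 <= x -> x <= n -> inv x (complete_tdg n).
Proof.
move=> x1 xn; have n0 : 0 < n by lia.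
have nm : n.-1 < n by lia.
apply/and3P; split; first exact: subxx.
- rewrite /num_initial; apply: leq_trans x1.
  rewrite -(cards1 (Ordinal n0)); apply: subset_leq_card.
  apply/subsetP => v; rewrite !inE => /forallP iv; apply/eqP/val_inj => /=.
  have := iv (Ordinal n0); rewrite inE /=; lia.
- rewrite /num_terminal; apply: leq_trans x1.
  rewrite -(cards1 (Ordinal nm)); apply: subset_leq_card.
  apply/subsetP => v; rewrite !inE => /forallP iv; apply/eqP/val_inj => /=.
  have := iv (Ordinal nm); rewrite inE /=; have := ltn_ord v; lia.
Qed.

Lemma inv_step x n (G H : graph n) : removal_step x x G H -> inv x G -> inv x H.
Proof.
move=> /existsP [e /andP [/and3P [eG hI hT] /eqP ->]] /and3P [sG _ _].
apply/and3P; split => //.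
exact: subset_trans (subD1set G e) sG.
Qed.

Theorem mainTheorem4 (x n : nat) :
  (1 <= x)%N -> (x <= n)%N ->
  forall G : {set 'I_n * 'I_n}, possible_result x x G -> is_xy_tdg x x G.
Proof.
move=> x1 xn G [/connectP [p Hp ->] term].
move: term; have : inv x (last (complete_tdg n) p).
  elim: p (complete_tdg n) (inv_complete x1 xn) Hp => [//|a p IH] s hs /= /andP [st pp].
  exact: IH (inv_step st hs) pp.
set L := last _ _ => /and3P [sL hI hT] term.
apply/and3P; split => //; apply/eqP/anti_leq.
  by rewrite hI (init_ge xn term hT).
by rewrite hT (term_ge xn term hI).
Qed.
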